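(* Let $\mathcal{T}$ be an unweighted tree on $L$ vertices such that (a) there is a vertex of degree $\ge 2$ from which all leaves are at the same distance, and (b) every other non-leaf vertex has degree $\ge 3$ (e.g. a complete binary tree). Let $f:\mathbb{N}\to\mathbb{R}$ be arbitrary. Then for every $\mathbf{x}\in\mathbb{R}^L$, the product $\mathbf{M}\mathbf{x}$ with $\mathbf{M} = [f(\mathrm{dist}_{\mathcal{T}}(i,j))]_{i,j=1,\dots,L}$ can be computed in time $O(L\log L)$.
   Context: $\mathrm{dist}_{\mathcal{T}}(i,j)$ is the number of edges on the path between $i$ and $j$. Values of $f$ are assumed available in $O(1)$ time each; time counts arithmetic operations. *)

(* Defs.v *)
From HB Require Import structures.
From mathcomp Require Import all_boot all_order all_algebra.
From mathcomp Require Import Rstruct.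
From Stdlib Require Rdefinitions.
Notation R := Rdefinitions.R.
Set Implicit Arguments. Unset Strict Implicit. Unset Printing Implicit Defensive.
Import Order.TTheory GRing.Theory Num.Theory.
Local Open Scope ring_scope.

Definition simple_graph (L : nat) (e : rel 'I_L) : Prop :=
  symmetric e /\ irreflexive e.

(* a tree: connected simple graph with exactly L-1 (undirected) edges *)
Definition is_tree (L : nat) (e : rel 'I_L) : Prop :=
  simple_graph e /\ (forall i j : 'I_L, connect e i j) /\
  #|[set p : 'I_L * 'I_L | e p.1 p.2]| = (2 * L.-1)%N.

Definition deg (L : nat) (e : rel 'I_L) (v : 'I_L) : nat := #|[set u | e v u]|.

Fixpoint ball (L : nat) (e : rel 'I_L) (n : nat) (i : 'I_L) : {set 'I_L} :=
  match n with
  | 0 => [set i]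
  | n.+1 => ball e n i :|: [set y | [exists x in ball e n i, e x y]]
  end.

(* graph distance = number of edges on a shortest path (for connected graphs;
   for a tree this is the number of edges on the unique path) *)
Definition dist (L : nat) (e : rel 'I_L) (i j : 'I_L) : nat :=
  #|[set n : 'I_L | j \notin ball e n i]|.

(* Registers are numbered by instruction order; operands refer to registers. *)
Inductive instr : Type :=
  | IInput of nat
  | IOracle of nat
  | IConst of R
  | IAdd of nat & nat
  | ISub of nat & nat
  | IMul of nat & nat
  | IDiv of nat & nat.

Definition exec_instr (L : nat) (f : nat -> R) (x : 'cV[R]_L)
  (regs : seq R) (c : instr) : R :=
  let rd k := nth 0 regs k in
  match c with
  | IInput k => if insub k is Some k' then x k' ord0 else 0
  | IOracle k => f k
  | IConst a => a
  | IAdd a b => rd a + rd b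
  | ISub a b => rd a - rd b
  | IMul a b => rd a * rd b
  | IDiv a b => rd a / rd b
  end.

Definition run (L : nat) (f : nat -> R) (x : 'cV[R]_L) (p : seq instr) : seq R :=
  foldl (fun regs c => rcons regs (exec_instr f x regs c)) [::] p.

Record program (L : nat) := Program {
  instrs : seq instr;
  outreg : 'I_L -> nat
}.

Definition prog_size (L : nat) (P : program L) : nat := size (instrs P).

Definition prog_eval (L : nat) (P : program L) (f : nat -> R) (x : 'cV[R]_L)
  : 'cV[R]_L :=
  \col_i nth 0 (run f x (instrs P)) (outreg P i).

Definition dist_matrix (L : nat) (e : rel 'I_L) (f : nat -> R) : 'M[R]_L :=
  \matrix_(i, j) f (dist e i j).

(* Main.v *)
Require Import Defs.
From HB Require Import structures.
From mathcomp Require Import all_boot all_order all_algebra.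
From mathcomp Require Import Rstruct.
From mathcomp Require Import zify.
Import GRing.Theory Num.Theory.
Set Implicit Arguments. Unset Strict Implicit. Unset Printing Implicit Defensive.

Section Balls.
Variable L : nat.
Variable e : rel 'I_L.

Lemma ball0 n i : i \in ball e n i.
Proof. elim: n => [|n IH] /=; first by rewrite in_set1. by rewrite in_setU IH. Qed.

Lemma ball_mono m n i : m <= n -> ball e m i \subset ball e n i.
Proof.
move=> /subnK <-; elim: (n - m) => [|k IH] //=.
apply: subset_trans IH _; rewrite /= subsetUl //.
Qed.

Lemma ball_step n i x y : x \in ball e n i -> e x y -> y \in ball e n.+1 i.
Proof. by move=> Hx Hxy /=; rewrite in_setU in_set; apply/orP; right; apply/existsP; exists x; rewrite Hx. Qed.

Lemma ball_case n i y : y \in ball e n.+1 i -> y \in ball e n i \/ exists2 x, x \in ball e n i & e x y.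
Proof.
rewrite /= in_setU in_set => /orP[H|/existsP[x /andP[H1 H2]]]; [by left|right; by exists x].
Qed.

Lemma ball_trans m n a b c : b \in ball e m a -> c \in ball e n b -> c \in ball e (m + n) a.
Proof.
move=> Hb; elim: n c => [|n IH] c; first by rewrite /= in_set1 addn0 => /eqP ->.
move/ball_case => [/IH H|[x /IH Hx Hxc]].
  by apply: (subsetP (ball_mono _ _)) H; rewrite addnS.
by rewrite addnS; apply: ball_step Hx Hxc.
Qed.

Lemma ball_first n i j : j \in ball e n.+1 i -> j = i \/ exists u, e i u /\ j \in ball e n u.
Proof.
elim: n j => [|n IH] j.
  move/ball_case => [|[x]]; first by rewrite /= in_set1 => /eqP; left.
  rewrite /= in_set1 => /eqP -> Hij; right; exists j; split => //; by rewrite /= in_set1.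
move/ball_case => [/IH [->|[u [Hu Hj]]]|[x /IH [->|[u [Hu Hx]]] Hxj]]; first by left.
- right; exists u; split => //; apply: (subsetP (ball_mono _ _)) Hj; exact: leqnSn.
- right; exists j; split => //; exact: ball0.
- right; exists u; split => //; exact: ball_step Hx Hxj.
Qed.

Hypothesis esym : symmetric e.

Lemma ball_sym n i j : j \in ball e n i -> i \in ball e n j.
Proof.
elim: n i j => [|n IH] i j; first by rewrite /= !in_set1 eq_sym.
move/ball_first => [->|[u [Hiu Hj]]]; first exact: ball0.
by apply: ball_step (IH _ _ Hj) _; rewrite esym.
Qed.

Lemma path_ball i p : path e i p -> last i p \in ball e (size p) i.
Proof.
elim: p i => [|y p IH] i /=; first by rewrite in_set1.
move=> /andP[Hiy Hp].
have H1 : y \in ball e 1 i by apply: ball_step Hiy; rewrite /= in_set1.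
by have := ball_trans H1 (IH _ Hp); rewrite add1n.
Qed.

Hypothesis econn : forall i j : 'I_L, connect e i j.

Lemma ball_conn i j : j \in ball e L.-1 i.
Proof.
have /connectP [p Hp ->] := econn i j.
case/shortenP: Hp => p' Hp' Hu _.
have Hs : size p' <= L.-1.
  have := card_uniqP Hu; rewrite /= => Hc.
  have := max_card (mem (i :: p')); rewrite card_ord Hc /= => H; lia.
by apply: (subsetP (ball_mono _ Hs)); apply: path_ball.
Qed.

Lemma card_lt n : #|[set m : 'I_L | m < n]| = minn n L.
Proof.
rewrite -sum1_card big_mkcond /=.
rewrite (eq_bigr (fun m : 'I_L => if (m < n)%N then 1 else 0)); last by move=> i _; rewrite in_set.
rewrite -(big_mkord xpredT (fun m => if (m < n)%N then 1 else 0)).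
elim: L => [|L' IH]; first by rewrite big_geq //; lia.
rewrite big_nat_recr //= IH; case: ifP; lia.
Qed.

Notation D := (dist e).

Lemma Dle n i j : (j \in ball e n i) = (D i j <= n).
Proof.
apply/idP/idP => H.
  rewrite /dist; apply: leq_trans (_ : #|[set m : 'I_L | m < n]| <= n).
    apply: subset_leq_card; apply/subsetP => m; rewrite !in_set => Hm.
    rewrite ltnNge; apply/negP => Hnm; move/negP: Hm; apply.
    exact: (subsetP (ball_mono i Hnm) _ H).
  rewrite card_lt; lia.
apply/negPn/negP => Hj.
have HnL : n < L.-1.
  rewrite ltnNge; apply/negP => Hn; move/negP: Hj; apply.
  exact: (subsetP (ball_mono i Hn) _ (ball_conn i j)).
have : #|[set m : 'I_L | m < n.+1]| <= D i j.
  apply: subset_leq_card; apply/subsetP => m; rewrite !in_set => Hm.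
  apply/negP => Hjm; move/negP: Hj; apply.
  exact: (subsetP (ball_mono i (ltnSE Hm)) _ Hjm).
rewrite card_lt; lia.
Qed.

Lemma Dii i : D i i = 0.
Proof. by apply/eqP; rewrite -leqn0 -Dle; apply: ball0. Qed.

Lemma D0 i j : D i j = 0 -> j = i.
Proof. by move=> H; have := leqnn (D i j); rewrite {2}H -Dle /= in_set1 => /eqP. Qed.

Lemma Dsym i j : D i j = D j i.
Proof.
apply/eqP; rewrite eqn_leq -!Dle; apply/andP; split; apply: ball_sym; rewrite Dle //.
Qed.

Lemma Dtri a b c : D a c <= D a b + D b c.
Proof. rewrite -Dle; apply: ball_trans; rewrite Dle //. Qed.

Lemma Dnbr a b c : e b c -> D a c <= (D a b).+1.
Proof. move=> H; rewrite -Dle; apply: ball_step H; rewrite Dle //. Qed.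

Lemma DltL a b : D a b < L.
Proof.
have := ball_conn a b; rewrite Dle; have : 0 < L by case: (a) => [m]; lia.
lia.
Qed.

Lemma Dpar a b : b != a -> exists c, e c b /\ (D a c).+1 = D a b.
Proof.
move=> Hba; case Hk: (D a b) => [|m].
  by move/D0: Hk => Hk; rewrite Hk eqxx in Hba.
have : b \in ball e m.+1 a by rewrite Dle Hk.
case/ball_case => [|[x Hx Hxb]]; first by rewrite Dle Hk ltnn.
exists x; split => //; move: Hx; rewrite Dle => Hx.
have := Dnbr a Hxb; rewrite Hk; lia.
Qed.

Definition par a b := odflt a [pick c | e c b && ((D a c).+1 == D a b)].

Lemma parP a b : b != a -> e (par a b) b /\ (D a (par a b)).+1 = D a b.
Proof.
move=> /Dpar [c [H1 H2]]; rewrite /par; case: pickP => [y /andP[Hy /eqP Hy2] | H] //=.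
by move: (H c); rewrite H1 H2 eqxx.
Qed.


Hypothesis ecard : #|[set p : 'I_L * 'I_L | e p.1 p.2]| = (2 * L.-1)%N.

Lemma par_edges a x y : e x y -> (x != a /\ y = par a x) \/ (y != a /\ x = par a y).
Proof.
move=> Hxy.
set E := [set p : 'I_L * 'I_L | e p.1 p.2].
set A := [set (b, par a b) | b in [set~ a]].
set B := [set (par a b, b) | b in [set~ a]].
have HAB : A :&: B = set0.
  apply/setP => p; rewrite in_set0 in_setI; apply/negP => /andP[/imsetP[b Hb ->] /imsetP[b' Hb' Heq]].
  case: Heq => H1 H2.
  rewrite in_setC1 in Hb; rewrite in_setC1 in Hb'.
  have := proj2 (parP Hb); have := proj2 (parP Hb').
  rewrite -H1 H2; lia.
have Hsub : A :|: B \subset E.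
  apply/subsetP => p; rewrite in_setU => /orP[/imsetP[b Hb ->]|/imsetP[b Hb ->]]; rewrite in_set /=;
  rewrite in_setC1 in Hb; have := proj1 (parP Hb) => //; by rewrite esym.
have Hc : #|E| <= #|A :|: B|.
  rewrite cardsU HAB cards0 subn0 !card_imset ?cardsC1 ?card_ord.
  - by rewrite /E ecard; lia.
  - by move=> u v [].
  - by move=> u v [].
have /eqP HE : A :|: B == E by rewrite eqEcard Hsub Hc.
have : (x, y) \in A :|: B by rewrite HE in_set.
rewrite in_setU => /orP[/imsetP[b Hb [-> ->]]|/imsetP[b Hb [-> ->]]].
  by left; rewrite in_setC1 in Hb.
by right; rewrite in_setC1 in Hb.
Qed.

Lemma nbr_class a b c : e b c ->
  (b != a /\ c = par a b /\ (D a c).+1 = D a b) \/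
  (c != a /\ b = par a c /\ (D a b).+1 = D a c).
Proof.
move=> H; case: (par_edges a H) => [[H1 H2]|[H1 H2]].
  left; have [_ H3] := parP H1; rewrite -H2 in H3; tauto.
right; have [_ H3] := parP H1; rewrite -H2 in H3; tauto.
Qed.


Local Open Scope ring_scope.

Definition N i := [set u | e i u].

Lemma count_nbr i j k :
  \sum_(u in N i) ((D u j == k)%:R : R) =
  if j == i then ((k == 1%N)%:R *+ deg e i)
  else (D i j == k.+1)%:R + ((D i j).+1 == k)%:R *+ (deg e i).-1.
Proof.
case: eqP => [->|/eqP Hji].
  rewrite /deg -sumr_const; apply: eq_bigr => u; rewrite in_set => Hu.
  case: (nbr_class i Hu) => [[]|[_ [_ H]]]; first by rewrite eqxx.
  by rewrite Dsym -H Dii eq_sym.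
have Hij : i != j by rewrite eq_sym.
have [Hp1 Hp2] := parP Hij.
set p := par j i in Hp1 Hp2.
have Hp : p \in N i by rewrite in_set esym.
rewrite (big_setD1 _ Hp) /=.
have -> : \sum_(u in N i :\ p) ((D u j == k)%:R : R) = \sum_(u in N i :\ p) ((D i j).+1 == k)%:R.
  apply: eq_bigr => u; rewrite in_setD1 in_set => /andP[Hup Hiu].
  case: (nbr_class j Hiu) => [[_ [Hu _]]|[_ [_ H]]]; first by move: Hup; rewrite Hu /p eqxx.
  by rewrite Dsym -H Dsym.
rewrite sumr_const /deg -/(N i) (cardsD1 p (N i)) Hp /=.
by rewrite add0n (Dsym p j) (Dsym i j) -Hp2 eqSS.
Qed.


Definition V (x : 'cV[R]_L) k i := \sum_j (D i j == k)%:R * x j ord0.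
Definition cf k i : R := if k == 0%N then 0 else (deg e i)%:R - 1 + (k == 1%N)%:R.

Lemma deg_pos i j : j != i -> (0 < deg e i)%N.
Proof.
move=> Hji; have Hij : i != j by rewrite eq_sym.
have [Hp1 _] := parP Hij; rewrite /deg card_gt0; apply/set0Pn; exists (par j i).
by rewrite in_set esym.
Qed.

Lemma V_rec x k i : \sum_(u in N i) V x k u = V x k.+1 i + cf k i * V x k.-1 i.
Proof.
rewrite /V exchange_big /= mulr_sumr -big_split /=; apply: eq_bigr => j _.
rewrite -mulr_suml count_nbr mulrA -mulrDl; congr (_ * _).
case: eqP => [->|/eqP Hji].
  rewrite Dii /cf; case: k => [|[|k]] //=.
  - by rewrite mul0rn add0r mul0r.
  - by rewrite add0r mulr1 subrK.
  - by rewrite mul0rn mulr0 addr0.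
have Hd := deg_pos Hji.
have HD : D i j != 0%N by apply/eqP => /D0 H; rewrite H eqxx in Hji.
rewrite /cf; case: k => [|[|k]] /=.
- by rewrite mul0rn mul0r.
- by rewrite eqSS (negbTE HD) mul0rn mulr0.
- rewrite eqSS addr0; congr (_ + _); rewrite -mulr_natr mulrC -subn1 natrB //.
Qed.


Variable r : 'I_L.
Variable d : nat.
Hypothesis Hr2 : (2 <= deg e r)%N.
Hypothesis Hleaf : forall l, deg e l = 1%N -> D r l = d.
Hypothesis Hint : forall v, v != r -> (2 <= deg e v)%N -> (3 <= deg e v)%N.

Lemma deg_nr v : v != r -> D r v != d -> (3 <= deg e v)%N.
Proof.
move=> Hv Hd; apply: Hint => //; have Hrv : r != v by rewrite eq_sym.
have := deg_pos Hrv.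
move=> Hpos; case H: (deg e v) => [|[|n]] //; first by rewrite H in Hpos.
by rewrite (Hleaf H) eqxx in Hd.
Qed.

Lemma card_off v : v != r -> #|N v :\ par r v| = (deg e v).-1.
Proof.
move=> Hv; have Hrv : r != v by rewrite eq_sym.
have [Hp _] := parP Hv.
by rewrite /deg -/(N v) (cardsD1 (par r v) (N v)) in_set esym Hp.
Qed.

Lemma step_deeper v : (d < D r v)%N -> exists c, D r c = (D r v).+1.
Proof.
move=> Hd.
have Hv : v != r by apply/eqP => Hv; rewrite Hv Dii in Hd.
have := deg_nr Hv; rewrite neq_ltn Hd orbT => /(_ isT) H3.
have : (0 < #|N v :\ par r v|)%N by rewrite card_off //; lia.
case/card_gt0P => c; rewrite in_setD1 in_set => /andP[Hc Hvc].
exists c; case: (nbr_class r Hvc) => [[_ [H _]]|[_ [_ H]]] //.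
by rewrite H eqxx in Hc.
Qed.

Lemma all_shallow v : (D r v <= d)%N.
Proof.
have H : forall n v, (d < D r v)%N -> exists w, (D r v + n <= D r w)%N.
  elim => [|n IH] w Hw; first by exists w; rewrite addn0.
  have [c Hc] := step_deeper Hw.
  have Hd' : (d < D r c)%N by rewrite Hc; lia.
  have [w' Hw'] := IH c Hd'.
  by exists w'; rewrite Hc in Hw'; lia.
rewrite leqNgt; apply/negP => /(H L) [w Hw].
have := DltL r w; lia.
Qed.

Lemma diam i j : (D i j <= 2 * d)%N.
Proof.
apply: leq_trans (Dtri i r j) _; rewrite Dsym.
have := all_shallow i; have := all_shallow j; lia.
Qed.

Definition ch v := [set c | (c != r) && (par r c == v)].
Definition lev t := [set v | D r v == t].

Lemma ch_card v : (D r v < d)%N -> (2 <= #|ch v|)%N.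
Proof.
move=> Hd; case: (eqVneq v r) => [->|Hv].
  apply: leq_trans Hr2 _; apply: subset_leq_card; apply/subsetP => c.
  rewrite !in_set => Hc; case: (nbr_class r Hc) => [[]|[H1 [H2 _]]]; first by rewrite eqxx.
  by rewrite H1 -H2 eqxx.
have H3 := deg_nr Hv; rewrite neq_ltn Hd /= in H3; have {}H3 := H3 isT.
apply: leq_trans (_ : ((deg e v).-1 <= _)%N); first by lia.
rewrite -card_off //; apply: subset_leq_card; apply/subsetP => c.
rewrite in_setD1 !in_set => /andP[Hc Hvc].
case: (nbr_class r Hvc) => [[_ [H _]]|[H1 [H2 _]]]; first by rewrite H eqxx in Hc.
by rewrite H1 -H2 eqxx.
Qed.

Lemma lev_step t : (t < d)%N -> (2 * #|lev t| <= #|lev t.+1|)%N.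
Proof.
move=> Htd.
have E1 : (2 * #|lev t| <= \sum_(v in lev t) #|ch v|)%N.
  rewrite -sum1_card big_distrr /=; apply: leq_sum => v; rewrite in_set => /eqP Hv.
  by rewrite muln1; apply: ch_card; rewrite Hv.
apply: leq_trans E1 _.
have -> : (\sum_(v in lev t) #|ch v| = \sum_(v in lev t) \sum_c (c \in ch v))%N.
  by apply: eq_bigr => v _; rewrite -sum1_card big_mkcond.
rewrite exchange_big /= -sum1_card [X in (_ <= X)%N]big_mkcond /=.
apply: leq_sum => c _.
case: (eqVneq c r) => [->|Hc].
  rewrite big1 // => v _; by rewrite in_set eqxx.
have [_ Hp] := parP Hc.
case Hcl: (c \in lev t.+1).
  have Hle : (\sum_(v in lev t) (c \in ch v) <= \sum_(v in lev t) (v == par r c))%N.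
    apply: leq_sum => v _; rewrite in_set Hc /=; case: eqP => // <-; by rewrite eqxx.
  have H1 : (\sum_(v in lev t) (v == par r c) <= 1)%N.
    case: (boolP (par r c \in lev t)) => Hpl.
      rewrite (bigD1 (par r c)) //= eqxx big1 // => v /andP[_ Hv]; by rewrite (negbTE Hv).
    rewrite big1 // => v Hv; case: eqP => // Hvp; by rewrite -Hvp Hv in Hpl.
  exact: leq_trans Hle H1.
rewrite leqn0; apply/eqP; rewrite big1 // => v; rewrite in_set => /eqP Hv; rewrite in_set Hc /=.
by case: eqP => // Hvp; move: Hcl; rewrite in_set -Hp Hvp Hv eqxx.
Qed.

Lemma lev_pow t : (t <= d)%N -> (2 ^ t <= #|lev t|)%N.
Proof.
elim: t => [|t IH] Ht.
  rewrite expn0 card_gt0; apply/set0Pn; exists r; by rewrite in_set Dii.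
have := lev_step Ht; have := IH (ltnW Ht); rewrite expnS; lia.
Qed.

Lemma d_small : (2 ^ d <= L)%N.
Proof. apply: leq_trans (lev_pow (leqnn d)) _; rewrite -[X in (_ <= X)%N]card_ord; exact: max_card. Qed.

End Balls.

Local Open Scope ring_scope.

Section Run.
Variable L : nat.
Variable f : nat -> R.
Variable x : 'cV[R]_L.

Definition runf regs p := foldl (fun regs c => rcons regs (exec_instr f x regs c)) regs p.
Arguments runf : simpl never.

Lemma runf_cat regs p q : runf regs (p ++ q) = runf (runf regs p) q.
Proof. by rewrite /runf foldl_cat. Qed.

Lemma runf_cons regs c p : runf regs (c :: p) = runf (rcons regs (exec_instr f x regs c)) p.
Proof. by []. Qed.

Lemma runf_ext regs p : exists t, runf regs p = regs ++ t.
Proof.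
elim: p regs => [|c p IH] regs; first by exists [::]; rewrite cats0.
rewrite runf_cons; have [t ->] := IH (rcons regs (exec_instr f x regs c)).
by exists (exec_instr f x regs c :: t); rewrite -cats1 -catA.
Qed.

Lemma size_runf regs p : size (runf regs p) = (size regs + size p)%N.
Proof.
elim: p regs => [|c p IH] regs; first by rewrite addn0.
by rewrite runf_cons IH size_rcons /= addSnnS.
Qed.

Definition hold (regs : seq R) r v := (r < size regs)%N /\ nth 0 regs r = v.

Lemma hold_cat regs t r v : hold regs r v -> hold (regs ++ t) r v.
Proof.
move=> [H1 H2]; split; first by rewrite size_cat ltn_addr.
by rewrite nth_cat H1.
Qed.

Lemma hold_runf regs p r v : hold regs r v -> hold (runf regs p) r v.
Proof. by move=> H; have [t ->] := runf_ext regs p; apply: hold_cat. Qed.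

Lemma hold_rcons regs a : hold (rcons regs a) (size regs) a.
Proof. by split; rewrite ?size_rcons // nth_rcons ltnn eqxx. Qed.

Lemma hold_nth regs r v : hold regs r v -> nth 0 regs r = v.
Proof. by case. Qed.

Fixpoint sum_aux (acc : nat) (s : seq nat) : seq instr :=
  if s is r :: s' then IAdd acc r :: sum_aux acc.+1 s' else [::].

Lemma size_sum_aux acc s : size (sum_aux acc s) = size s.
Proof. by elim: s acc => [|r s IH] acc //=; rewrite IH. Qed.

Lemma sum_aux_spec (A : eqType) (s : seq A) (reg : A -> nat) (w : A -> R) acc regs a :
  size regs = acc.+1 -> hold regs acc a ->
  (forall y, y \in s -> hold regs (reg y) (w y)) ->
  hold (runf regs (sum_aux acc (map reg s))) (acc + size s)%N (a + \sum_(y <- s) w y).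
Proof.
elim: s acc regs a => [|y s IH] acc regs a Hs Ha Hw /=.
  by rewrite big_nil addr0 addn0.
rewrite runf_cons big_cons addrA addnS -addSn.
apply: IH.
- by rewrite size_rcons Hs.
- by rewrite /= (hold_nth Ha) (hold_nth (Hw y (mem_head _ _))) -Hs; apply: hold_rcons.
- by move=> z Hz; rewrite -cats1; apply: hold_cat; apply: Hw; rewrite in_cons Hz orbT.
Qed.

Fixpoint ms_aux (acc : nat) (s : seq (nat * nat)) : seq instr :=
  if s is p :: s' then IMul p.1 p.2 :: IAdd acc acc.+1 :: ms_aux acc.+2 s' else [::].

Lemma size_ms_aux acc s : size (ms_aux acc s) = (2 * size s)%N.
Proof. elim: s acc => [|p s IH] acc //=; rewrite IH; lia. Qed.

Lemma ms_aux_spec (A : eqType) (s : seq A) (r1 r2 : A -> nat) (w1 w2 : A -> R) acc regs a :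
  size regs = acc.+1 -> hold regs acc a ->
  (forall y, y \in s -> hold regs (r1 y) (w1 y) /\ hold regs (r2 y) (w2 y)) ->
  hold (runf regs (ms_aux acc [seq (r1 y, r2 y) | y <- s])) (acc + 2 * size s)%N
       (a + \sum_(y <- s) w1 y * w2 y).
Proof.
elim: s acc regs a => [|y s IH] acc regs a Hs Ha Hw /=.
  by rewrite big_nil addr0 addn0.
rewrite !runf_cons big_cons addrA.
have [Hw1 Hw2] := Hw y (mem_head _ _).
set regs1 := rcons regs _.
have H1 : hold regs1 acc.+1 (w1 y * w2 y).
  by rewrite /regs1 /= (hold_nth Hw1) (hold_nth Hw2) -Hs; apply: hold_rcons.
set regs2 := rcons regs1 _.
have H2 : hold regs2 acc.+2 (a + w1 y * w2 y).
  rewrite /regs2 /= (hold_nth H1).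
  have -> : nth 0 regs1 acc = a by apply: hold_nth; rewrite /regs1 -cats1; apply: hold_cat.
  have -> : acc.+2 = size regs1 by rewrite /regs1 size_rcons Hs.
  exact: hold_rcons.
have -> : (acc + 2 * (size s).+1 = acc.+2 + 2 * size s)%N by lia.
apply: IH => //.
- by rewrite /regs2 /regs1 !size_rcons Hs.
- move=> z Hz; have [Hz1 Hz2] := Hw z (ltac:(by rewrite in_cons Hz orbT)).
  by split; rewrite /regs2 /regs1 -!cats1 -catA; apply: hold_cat.
Qed.

Section Blocks.
Variable Q : nat -> seq R -> Prop.
Variable Inv : seq R -> Prop.
Variable Nmax : nat.
Variable start : nat.
Variable sz : nat -> nat.
Variable blk : nat -> nat -> seq instr.
Hypothesis size_blk : forall n b, size (blk n b) = sz n.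
Hypothesis Qst : forall n regs t, Q n regs -> Q n (regs ++ t).
Hypothesis Invst : forall regs t, Inv regs -> Inv (regs ++ t).

Definition bpos n := (start + \sum_(m < n) sz m)%N.
Definition bcode N := flatten [seq blk n (bpos n) | n <- iota 0 N].

Hypothesis spec : forall n regs, (n < Nmax)%N -> size regs = bpos n -> Inv regs ->
  (forall m, (m < n)%N -> Q m regs) -> Q n (runf regs (blk n (bpos n))).

Lemma size_bcode N : size (bcode N) = \sum_(m < N) sz m.
Proof.
elim: N => [|N IH]; first by rewrite big_ord0.
have E : iota 0 N.+1 = iota 0 N ++ [:: N] by rewrite -addn1 iotaD.
by rewrite big_ord_recr -IH /bcode E map_cat flatten_cat size_cat /= cats0 size_blk.
Qed.

Lemma bcode_spec N regs : (N <= Nmax)%N -> size regs = start -> Inv regs ->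
  forall n, (n < N)%N -> Q n (runf regs (bcode N)).
Proof.
move=> + Hs Hi; elim: N => [|N IH] // HN n Hn.
have {}IH := IH (ltnW HN).
have E : iota 0 N.+1 = iota 0 N ++ [:: N] by rewrite -addn1 iotaD.
rewrite /bcode E map_cat flatten_cat runf_cat -/(bcode N) /= cats0.
have Hsz : size (runf regs (bcode N)) = bpos N by rewrite size_runf size_bcode Hs.
have [t Ht] := runf_ext regs (bcode N).
have HQ : forall m, (m < N)%N -> Q m (runf regs (bcode N)) by move=> m Hm; apply: IH.
case: (ltnP n N) => Hn'.
  have [t' ->] := runf_ext (runf regs (bcode N)) (blk N (bpos N)); exact: Qst (HQ _ Hn').
have -> : n = N by lia.
apply: spec => //; rewrite Ht; exact: Invst.
Qed.
End Blocks.
Arguments bcode : simpl never.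

Definition vblk (s : seq nat) (c : R) (pr b : nat) : seq instr :=
  IConst 0 :: sum_aux b s ++
  [:: IConst c; IMul (b + (size s).+1) pr; ISub (b + size s) (b + (size s).+2)].

Lemma size_vblk s c pr b : size (vblk s c pr b) = (size s + 4)%N.
Proof. by rewrite /vblk /= size_cat size_sum_aux /=; lia. Qed.

Lemma vblk_spec (A : eqType) (s : seq A) (reg : A -> nat) (w : A -> R) c pr vp b regs :
  size regs = b -> hold regs pr vp ->
  (forall y, y \in s -> hold regs (reg y) (w y)) ->
  hold (runf regs (vblk (map reg s) c pr b)) (b + (size s).+3)%N (\sum_(y <- s) w y - c * vp).
Proof.
move=> Hs Hp Hw; rewrite /vblk runf_cons runf_cat /=.
set regs1 := rcons regs _.
have H1 : hold regs1 b 0 by rewrite /regs1 -Hs; apply: hold_rcons.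
have Hw1 : forall y, y \in s -> hold regs1 (reg y) (w y).
  by move=> y Hy; rewrite /regs1 -cats1; apply: hold_cat; apply: Hw.
have := sum_aux_spec (reg:=reg) (w:=w) (acc:=b) (regs:=regs1) (a:=0) (s:=s).
rewrite add0r /regs1 size_rcons Hs => /(_ erefl H1 Hw1).
set regs2 := runf _ _ => H2.
have Hs2 : size regs2 = (b + size s).+1 by rewrite /regs2 size_runf size_rcons size_sum_aux size_map Hs addSn.
have Hp2 : hold regs2 pr vp by apply: hold_runf; rewrite -cats1; apply: hold_cat.
rewrite !runf_cons /runf /= size_map.
set r3 := rcons regs2 c.
have H3 : hold r3 (b + (size s)).+1 c by rewrite /r3 -Hs2; apply: hold_rcons.
set r4 := rcons r3 _.
have H4 : hold r4 (b + (size s)).+2 (c * vp).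
  rewrite /r4 /= addnS (hold_nth H3).
  have -> : nth 0 r3 pr = vp by apply: hold_nth; rewrite /r3 -cats1; apply: hold_cat.
  have -> : (b + size s).+2 = size r3 by rewrite /r3 size_rcons Hs2.
  exact: hold_rcons.
have -> : (b + (size s).+3 = size r4)%N by rewrite /r4 /r3 !size_rcons Hs2; lia.
have H4b : hold r4 (b + (size s).+2) (c * vp) by rewrite !addnS.
rewrite (hold_nth H4b).
have -> : nth 0 r4 (b + size s) = \sum_(y <- s) w y.
  by apply: hold_nth; rewrite /r4 /r3 -!cats1 -catA; apply: hold_cat.
exact: hold_rcons.
Qed.

End Run.

Lemma sum_const_ord (n c : nat) : (\sum_(m < n) c)%N = (n * c)%N.
Proof. elim: n => [|n IH]; first by rewrite big_ord0. by rewrite big_ord_recr /= IH mulSn addnC. Qed.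

Section Prog.
Variables (L K : nat) (nbr : nat -> seq nat) (cfn : nat -> nat -> R).

Definition szv n := (size (nbr n) + 4)%N.
Definition SS := (\sum_(n < L) szv n)%N.
Definition base0 := (L + K.+1)%N.
Definition Rg k n := if k == 0%N then n
  else (base0 + k.-1 * SS + \sum_(m < n) szv m + (size (nbr n)).+3)%N.
Definition lvl t b := bcode b szv (fun n b' => vblk (map (Rg t) (nbr n)) (cfn t n) (Rg t.-1 n) b') L.
Definition P0 := bcode 0 (fun _ => 1%N) (fun n _ => [:: IInput n]) L.
Definition P1 := bcode L (fun _ => 1%N) (fun k _ => [:: IOracle k]) K.+1.
Definition Plev := bcode base0 (fun _ => SS) lvl K.
Definition ostart := (base0 + K * SS)%N.
Definition oblk n b := IConst 0 :: ms_aux b [seq (L + k, Rg k n)%N | k <- iota 0 K.+1].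
Definition Pout := bcode ostart (fun _ => (2 * K.+1).+1)%N oblk L.
Definition prog_instrs := P0 ++ P1 ++ Plev ++ Pout.
Definition outreg n := (ostart + n * (2 * K.+1).+1 + 2 * K.+1)%N.

Lemma size_lvl t b : size (lvl t b) = SS.
Proof. rewrite /lvl; apply: size_bcode => n b'; by rewrite size_vblk size_map. Qed.

Lemma size_oblk n b : size (oblk n b) = (2 * K.+1).+1.
Proof.
have -> : size (oblk n b) = (size (ms_aux b [seq (L + k, Rg k n)%N | k <- iota 0 K.+1])).+1 by [].
by rewrite size_ms_aux size_map size_iota.
Qed.

Lemma size_prog : size prog_instrs = (L + K.+1 + K * SS + L * (2 * K.+1).+1)%N.
Proof.
have H0 : size P0 = L by rewrite /P0 size_bcode // sum_const_ord muln1.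
have H1 : size P1 = K.+1 by rewrite /P1 size_bcode // sum_const_ord muln1.
have H2 : size Plev = (K * SS)%N by rewrite /Plev size_bcode ?sum_const_ord //; exact: size_lvl.
have H3 : size Pout = (L * (2 * K.+1).+1)%N.
  rewrite /Pout size_bcode ?sum_const_ord // => n b.
  exact: size_oblk.
rewrite /prog_instrs size_cat H0 size_cat H1 size_cat H2 H3; lia.
Qed.

Variable f : nat -> R.
Variable x : 'cV[R]_L.
Variable Vv : nat -> nat -> R.
Hypothesis HV0 : forall n, (n < L)%N -> Vv 0 n = exec_instr f x [::] (IInput n).
Hypothesis Hnb : forall n m, (n < L)%N -> m \in nbr n -> (m < L)%N.
Hypothesis Hrec : forall k n, (n < L)%N ->
  \sum_(m <- nbr n) Vv k m - cfn k n * Vv k.-1 n = Vv k.+1 n.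

Definition Inv01 regs := (forall n, (n < L)%N -> hold regs n (Vv 0 n)) /\
  (forall k, (k < K.+1)%N -> hold regs (L + k) (f k)).
Definition Qlev t regs := forall n, (n < L)%N -> hold regs (Rg t.+1 n) (Vv t.+1 n).

Lemma Inv01_cat regs t : Inv01 regs -> Inv01 (regs ++ t).
Proof. by case=> H1 H2; split => *; apply: hold_cat; auto. Qed.

Lemma Qlev_cat k regs t : Qlev k regs -> Qlev k (regs ++ t).
Proof. by move=> H n Hn; apply: hold_cat; auto. Qed.

Lemma Hget t regs : Inv01 regs -> (forall m, (m < t)%N -> Qlev m regs) ->
  forall k n, (k <= t)%N -> (n < L)%N -> hold regs (Rg k n) (Vv k n).
Proof.
move=> [H0 _] HQ [|k] n Hk Hn; first by exact: H0.
exact: HQ.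
Qed.

Lemma spec_01 : Inv01 (runf f x [::] (P0 ++ P1)) /\ size (runf f x [::] (P0 ++ P1)) = base0.
Proof.
have HA : forall n, (n < L)%N -> hold (runf f x [::] P0) n (Vv 0 n).
  apply: (bcode_spec (Q := fun n regs => hold regs n (Vv 0 n)) (Inv := fun _ => True) (Nmax := L)) => //.
  - by move=> *; exact: hold_cat.
  - move=> n regs Hn; rewrite /bpos sum_const_ord muln1 add0n => Hs _ _.
    rewrite /runf /= HV0 // -Hs; exact: hold_rcons.
have HsA : size (runf f x [::] P0) = L by rewrite size_runf /P0 size_bcode // sum_const_ord muln1.
rewrite runf_cat; split; last by rewrite size_runf HsA /P1 size_bcode // sum_const_ord muln1.
split.
  by move=> n Hn; apply: hold_runf; auto.
apply: (bcode_spec (Q := fun k regs => hold regs (L + k) (f k)) (Inv := fun _ => True) (Nmax := K.+1)) => //.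
- by move=> *; exact: hold_cat.
- move=> n regs Hn; rewrite /bpos sum_const_ord muln1 => Hs _ _.
  rewrite /runf /= -Hs; exact: hold_rcons.
Qed.

Lemma spec_lev : forall t, (t < K)%N -> Qlev t (runf f x (runf f x [::] (P0 ++ P1)) Plev).
Proof.
have [HI Hs] := spec_01.
apply: (bcode_spec (Q := Qlev) (Inv := Inv01) (Nmax := K)) => //.
- exact: size_lvl.
- exact: Qlev_cat.
- exact: Inv01_cat.
move=> t regs Ht; rewrite /bpos sum_const_ord => Hsz HI' HQ.
rewrite /lvl.
apply: (bcode_spec (Q := fun n regs => hold regs (Rg t.+1 n) (Vv t.+1 n))
                   (Inv := fun regs => Inv01 regs /\ forall m, (m < t)%N -> Qlev m regs) (Nmax := L)) => //.
- by move=> n b'; rewrite size_vblk size_map.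
- by move=> *; exact: hold_cat.
- by move=> regs0 t0 [H1 H2]; split; [exact: Inv01_cat | move=> m Hm; apply: Qlev_cat; auto].
move=> n regs' Hn Hsz' [HI'' HQ'] _.
rewrite -(Hrec t Hn).
have -> : Rg t.+1 n = (bpos (base0 + t * SS) szv n + (size (nbr n)).+3)%N by rewrite /Rg /bpos /=; lia.
apply: vblk_spec => //.
- apply: (Hget HI'' HQ') => //; lia.
- move=> y Hy; apply: (Hget HI'' HQ') => //; exact: Hnb Hy.
Qed.

Lemma spec_out : forall n, (n < L)%N ->
  hold (runf f x [::] prog_instrs) (outreg n) (\sum_(k <- iota 0 K.+1) f k * Vv k n).
Proof.
have [HI Hs] := spec_01.
have HL := spec_lev.
move=> n Hn; rewrite /prog_instrs catA runf_cat.
set R01 := runf f x [::] (P0 ++ P1); rewrite runf_cat.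
move: n Hn.
apply: (bcode_spec (Q := fun n regs => hold regs (outreg n) (\sum_(k <- iota 0 K.+1) f k * Vv k n))
          (Inv := fun regs => Inv01 regs /\ forall m, (m < K)%N -> Qlev m regs) (Nmax := L)) => //.
- by move=> n b; exact: size_oblk.
- by move=> *; exact: hold_cat.
- by move=> regs0 t0 [H1 H2]; split; [exact: Inv01_cat | move=> m Hm; apply: Qlev_cat; auto].
2: by rewrite size_runf Hs /Plev size_bcode ?sum_const_ord //; exact: size_lvl.
2: split; [by have [t ->] := runf_ext f x R01 Plev; exact: Inv01_cat | exact: HL].
move=> n regs Hn; rewrite /bpos sum_const_ord => Hsz [HI' HQ] _.
rewrite /oblk runf_cons.
have -> : outreg n = (ostart + n * (2 * K.+1).+1 + 2 * size (iota 0 K.+1))%N by rewrite size_iota.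
rewrite -[X in hold _ _ X]add0r.
apply: ms_aux_spec.
- by rewrite size_rcons Hsz.
- by rewrite /= -Hsz; exact: hold_rcons.
move=> k; rewrite mem_iota add0n => Hk; split; rewrite -cats1; apply: hold_cat.
  by case: HI' => _ H; apply: H.
apply: (Hget HI' HQ) => //; lia.
Qed.

End Prog.

Local Close Scope ring_scope.

Lemma card_edges (L : nat) (e : rel 'I_L) :
  #|[set p : 'I_L * 'I_L | e p.1 p.2]| = \sum_(i : 'I_L) deg e i.
Proof.
transitivity (\sum_(p : 'I_L * 'I_L) (e p.1 p.2 : nat)).
  rewrite -sum1_card big_mkcond /=; apply: eq_bigr => p _; rewrite in_set; by case: (e _ _).
transitivity (\sum_(i : 'I_L) \sum_(j : 'I_L) (e i j : nat)); last first.
  apply: eq_bigr => i _; rewrite /deg -sum1_card big_mkcond /=.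
  rewrite [RHS]big_mkcond; apply: eq_bigr => j _; rewrite in_set; by case: (e _ _).
by rewrite pair_bigA.
Qed.

Lemma V0 (L : nat) (e : rel 'I_L) (econn : forall i j : 'I_L, connect e i j)
  (x : 'cV[R]_L) i : V e x 0 i = x i ord0.
Proof.
rewrite /V (bigD1 i) //= (Dii econn) eqxx mul1r big1 ?addr0 // => j Hj.
case: eqP => [/(D0 econn) H|_]; last by rewrite mul0r.
by rewrite H eqxx in Hj.
Qed.

Local Open Scope ring_scope.

Theorem corollary6p3 :
  exists C : nat,
  forall (L : nat) (e : rel 'I_L),
    is_tree e ->
    (exists r : 'I_L,
       (2 <= deg e r)%N /\
       (exists d : nat, forall l : 'I_L, deg e l = 1%N -> dist e r l = d) /\
       (forall v : 'I_L, v != r -> (2 <= deg e v)%N -> (3 <= deg e v)%N)) ->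
    exists P : program L,
      (prog_size P <= C * (L * up_log 2 L))%N /\
      forall (f : nat -> R) (x : 'cV[R]_L),
        prog_eval P f x = dist_matrix e f *m x.
Proof.
exists 30%N => L e [[esym _] [econn ecard]] [r [Hr2 [[d Hleaf] Hint]]].
set K := (2 * d)%N.
pose vx (n : nat) : 'I_L := insubd r n.
pose nbr (n : nat) := [seq val u | u <- enum (N e (vx n))].
pose cfn k n := cf e k (vx n).
exists (Program (prog_instrs L K nbr cfn) (fun i => outreg L K nbr i)).
have HL2 : (2 <= L)%N.
  apply: leq_trans Hr2 _; rewrite -[X in (_ <= X)%N]card_ord; exact: max_card.
have Hd := d_small esym econn ecard Hr2 Hleaf Hint.
have HdU : (d <= up_log 2 L)%N.
  rewrite -[X in (X <= _)%N](up_expnK d (isT : (1 < 2)%N)); exact: leq_up_log.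
have HU : (0 < up_log 2 L)%N by rewrite up_log_gt0.
split.
  rewrite /prog_size /= size_prog.
  have HS : (SS L nbr = 2 * L.-1 + 4 * L)%N.
    rewrite /SS /szv -ecard card_edges.
    have -> : (\sum_(n < L) (size (nbr n) + 4) = \sum_(i : 'I_L) (deg e i + 4))%N.
      apply: eq_bigr => i _; rewrite /nbr size_map -cardE /deg /vx valKd //.
    by rewrite big_split /= sum_const_ord mulnC.
  rewrite HS /K; nia.
move=> f x; apply/matrixP => i j; rewrite !mxE (ord1 j).
have HV0 : forall n, (n < L)%N -> V e x 0%N (vx n) = exec_instr f x [::] (IInput n).
  move=> n Hn; rewrite (V0 econn) /vx /insubd /= (insubT (fun k => k < L)%N Hn) /=.
  by [].
have Hnb : forall n (m : nat), (n < L)%N -> m \in nbr n -> (m < L)%N.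
  move=> n m _ /mapP [u _ ->]; exact: ltn_ord.
have Hrec : forall k n, (n < L)%N ->
    \sum_(m <- nbr n) V e x k (vx m) - cfn k n * V e x k.-1 (vx n) = V e x k.+1 (vx n).
  move=> k n _; rewrite /nbr big_map.
  rewrite (eq_bigr (fun u => V e x k u)); last by move=> u _; rewrite /vx valKd.
  by rewrite big_enum /= (V_rec esym econn ecard) /cfn addrK.
have Hout := spec_out K (nbr := nbr) (cfn := cfn) (f := f) (x := x)
  (Vv := fun k n => V e x k (vx n)) HV0 Hnb Hrec (ltn_ord i).
have -> : run f x (prog_instrs L K nbr cfn) = runf f x [::] (prog_instrs L K nbr cfn) by [].
rewrite /= (hold_nth Hout) /vx valKd.
under [RHS]eq_bigr => j0 _ do rewrite mxE.
rewrite /V (eq_bigr (fun k => \sum_j f k * ((dist e i j == k)%:R * x j ord0))); last by move=> k _; rewrite mulr_sumr.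
rewrite exchange_big /=; apply: eq_bigr => j0 _.
have Hdj : dist e i j0 \in iota 0 K.+1.
  by rewrite mem_iota add0n ltnS; exact: (diam esym econn ecard Hr2 Hleaf Hint).
rewrite (bigD1_seq (dist e i j0)) ?iota_uniq //.
have -> : (dist e i j0 == dist e i j0) = true by apply/eqP.
rewrite mul1r big1 => [|k Hk]; first by rewrite /= addr0.
by rewrite eq_sym (negbTE Hk) mul0r mulr0.
exact: (iota_uniq 0 K.+1).
Qed.
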